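(* For all $r\in[0,35]$ and all integers $n\ge73$, $|f(r)-f^{(n)}(r)|\le0.0052$, where $f^{(n)}(r)=\max_{4\le m\le n}f_m(r)$ and $f(r)=\sup_{m\ge4}f_m(r)$.
   Context: For $r\ge0$, $\mu_\pm=(1\pm\sqrt{1+4r})/2$, $\mu=\mu_-/\mu_+$, $\alpha_k(r)=\frac1{\mu_+}\frac{1-\mu^k}{1-\mu^{k+1}}$ for $k\ge1$, and for $m\ge4$ $$f_m(r)=r\alpha_{m-2}(r)\alpha_m(r)\Big[\frac{(1-\alpha_{m-1}(r)(1+r))^2}{1+2r}+\frac{r\alpha_{m-3}(r)(1-\alpha_{m-1}(r))^2}{1+r}\Big].$$ *)

(* Defs.v *)
From Stdlib Require Import Reals Lra.
From Coquelicot Require Import Coquelicot.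
Open Scope R_scope.

Definition mu_plus (r : R) : R := (1 + sqrt (1 + 4 * r)) / 2.
Definition mu_minus (r : R) : R := (1 - sqrt (1 + 4 * r)) / 2.
Definition mu (r : R) : R := mu_minus r / mu_plus r.

Definition alpha (k : nat) (r : R) : R :=
  (1 / mu_plus r) * ((1 - mu r ^ k) / (1 - mu r ^ (k + 1))).

(* f_m(r), meaningful for m >= 4 *)
Definition fm (m : nat) (r : R) : R :=
  r * alpha (m - 2) r * alpha m r *
  ((1 - alpha (m - 1) r * (1 + r)) ^ 2 / (1 + 2 * r)
   + r * alpha (m - 3) r * (1 - alpha (m - 1) r) ^ 2 / (1 + r)).

Fixpoint fmax_aux (k : nat) (r : R) : R :=
  match k with
  | O => fm 4 r
  | S k' => Rmax (fmax_aux k' r) (fm (5 + k') r)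
  end.

(* f^(n)(r) = max_{4 <= m <= n} f_m(r), for n >= 4 *)
Definition fn (n : nat) (r : R) : R := fmax_aux (n - 4) r.

Definition f_sup (r : R) : Rbar := Sup_seq (fun k => fm (k + 4) r).

(* Main.v *)
Require Import Defs.
From Stdlib Require Import Reals.
From Coquelicot Require Import Coquelicot.
From Stdlib Require Import Lra Psatz Lia.
Open Scope R_scope.

Lemma abs_inv x b : Rabs x <= b -> -b <= x <= b.
Proof. unfold Rabs; destruct Rcase_abs; lra. Qed.

Definition gg r A B C D := r*A*B*((1 - C*(1+r))^2/(1+2*r) + r*D*(1-C)^2/(1+r)).

Lemma core (r a u1 u2 u3 u4 : R) :
  0 <= r -> 0 < a <= 1 -> r*a*a <= 1 -> (a*(1+r))^2 <= 4*(1+2*r) ->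
  Rabs u1 <= 1/40000 -> Rabs u2 <= 1/40000 -> Rabs u3 <= 1/40000 -> Rabs u4 <= 1/40000 ->
  Rabs (gg r (a*(1+u1)) (a*(1+u2)) (a*(1+u3)) (a*(1+u4)) - gg r a a a a) <= 26/10000.
Proof.
  intros Hr Ha HK Hq H1 H2 H3 H4.
  set (d := 1/40000) in *.
  pose proof (abs_inv _ _ H1); pose proof (abs_inv _ _ H2); pose proof (abs_inv _ _ H3); pose proof (abs_inv _ _ H4).
  set (y := 1 + 2*r). set (q := a*(1+r)). set (K := r*a*a).
  assert (Hy : 1 <= y) by (unfold y; lra).
  assert (Hq0 : 0 <= q) by (unfold q; nra).
  assert (Hq1 : q <= 2*y) by (unfold q, y; nra).
  assert (Hq2 : q*q <= 4*y) by (unfold q, y in *; nra).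
  set (T1 := fun u => (1 - q*(1+u))^2/y).
  set (c := r*a/(1+r)). set (b := 1 - a).
  assert (Hc : 0 <= c <= 1).
  { unfold c. split. unfold Rdiv; apply Rmult_le_pos; [nra | left; apply Rinv_0_lt_compat; lra]. apply Rmult_le_reg_r with (1+r); [lra|].
    unfold Rdiv. rewrite Rmult_assoc, Rinv_l by lra. nra. }
  set (T2 := fun u v => c*(1+v)*(b - a*u)^2).
  assert (Hg : forall u1 u2 u3 u4, gg r (a*(1+u1)) (a*(1+u2)) (a*(1+u3)) (a*(1+u4))
      = K*((1+u1)*(1+u2))*(T1 u3 + T2 u3 u4)).
  { intros. unfold gg, K, T1, T2, q, c, b, y. field. lra. }
  assert (Hg0 : gg r a a a a = K*(T1 0 + T2 0 0)).
  { transitivity (gg r (a*(1+0)) (a*(1+0)) (a*(1+0)) (a*(1+0))); [f_equal; ring | rewrite Hg; ring]. }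
  rewrite Hg, Hg0.
  assert (HT1 : - (13*d) <= T1 u3 - T1 0 <= 13*d).
  { unfold T1.
    replace ((1 - q * (1 + u3)) ^ 2 / y - (1 - q * (1 + 0)) ^ 2 / y)
      with ((-2*(1-q)*q*u3 + q*q*u3*u3)/y) by (field; lra).
    assert (A1 : Rabs (-2*(1-q)*q*u3 + q*q*u3*u3) <= 13*d*y).
    { apply Rle_trans with (Rabs (-2*(1-q)*q*u3) + Rabs (q*q*u3*u3)). apply Rabs_triang.
      rewrite !Rabs_mult. rewrite (Rabs_right q) by lra.
      assert (Rabs u3 <= d) by (apply Rabs_le; lra).
      assert (Rabs (1-q) <= 1 + q) by (apply Rabs_le; lra).
      assert (0 <= Rabs u3) by apply Rabs_pos.
      assert (Hm2 : Rabs (-2) = 2) by (unfold Rabs; destruct Rcase_abs; lra).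
      rewrite Hm2.
      assert (2 * Rabs (1 - q) * q * Rabs u3 <= 2*(1+q)*q*d).
      { assert (0 <= Rabs (1-q)) by apply Rabs_pos.
        assert (0 <= (1+q)*q - Rabs(1-q)*q) by nra. nra. }
      assert (q*q*Rabs u3 * Rabs u3 <= 4*y*d*d).
      { assert (Rabs u3 * Rabs u3 <= d*d) by nra. nra. }
      unfold d in *. nra. }
    apply abs_inv in A1. split.
    apply Rmult_le_reg_r with y; [lra|]. unfold Rdiv; rewrite Rmult_assoc, Rinv_l by lra. lra.
    apply Rmult_le_reg_r with y; [lra|]. unfold Rdiv; rewrite Rmult_assoc, Rinv_l by lra. lra. }
  assert (HT10 : 0 <= T1 0 <= 5).
  { unfold T1; cbv beta. split. unfold Rdiv; apply Rmult_le_pos; [apply pow2_ge_0 | left; apply Rinv_0_lt_compat; lra].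
    apply Rmult_le_reg_r with y; [lra|]. unfold Rdiv; rewrite Rmult_assoc, Rinv_l by lra. nra. }
  assert (HT1p : 0 <= T1 u3).
  { unfold T1; cbv beta. unfold Rdiv; apply Rmult_le_pos; [apply pow2_ge_0 | left; apply Rinv_0_lt_compat; lra]. }
  assert (Hb : 0 <= b < 1) by (unfold b; lra).
  assert (HT20 : 0 <= T2 0 0 <= 1) by (unfold T2; cbv beta; split; nra).
  assert (Hs1 : 0 <= (b - a*u3)^2 <= (1+d)^2).
  { split. apply pow2_ge_0. assert (-(1+d) <= b - a*u3 <= 1+d) by (unfold d in *; nra). nra. }
  assert (Hs2 : -(d*(2+d)) <= (b - a*u3)^2 - b^2 <= d*(2+d)).
  { replace ((b - a*u3)^2 - b^2) with ((a*u3)*(a*u3 - 2*b)) by ring.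
    assert (-d <= a*u3 <= d) by nra.
    assert (-(2+d) <= a*u3 - 2*b <= d) by nra. nra. }
  assert (HT2 : -(4*d) <= T2 u3 u4 - T2 0 0 <= 4*d).
  { unfold T2; cbv beta. replace (c * (1 + u4) * (b - a * u3) ^ 2 - c * (1 + 0) * (b - a * 0) ^ 2)
      with (c * (u4 * (b - a*u3)^2 + ((b - a*u3)^2 - b^2))) by ring.
    assert (-(d*(1+d)^2) <= u4 * (b - a*u3)^2 <= d*(1+d)^2) by nra.
    assert (-(4*d) <= u4 * (b - a*u3)^2 + ((b - a*u3)^2 - b^2) <= 4*d) by (unfold d in *; nra).
    nra. }
  assert (HT2p : 0 <= T2 u3 u4) by (unfold T2; cbv beta; apply Rmult_le_pos; [apply Rmult_le_pos; unfold d in *; lra | apply pow2_ge_0]).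
  set (w := (1+u1)*(1+u2) - 1).
  assert (Hw : -(3*d) <= w <= 3*d) by (unfold w, d in *; nra).
  set (S := T1 u3 + T2 u3 u4).
  assert (HS : 0 <= S <= 7) by (unfold S, d in *; lra).
  assert (HK0 : 0 <= K <= 1) by (unfold K; split; nra).
  replace (K * ((1 + u1) * (1 + u2)) * S - K * (T1 0 + T2 0 0))
    with (K * (w*S + (T1 u3 - T1 0) + (T2 u3 u4 - T2 0 0))) by (unfold w, S; ring).
  assert (-(21*d) <= w*S <= 21*d) by nra.
  apply Rabs_le.
  assert (-(38*d) <= w*S + (T1 u3 - T1 0) + (T2 u3 u4 - T2 0 0) <= 38*d) by lra.
  set (E := w*S + (T1 u3 - T1 0) + (T2 u3 u4 - T2 0 0)) in *.
  assert (0 <= K * (38*d - E)) by (apply Rmult_le_pos; lra).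
  assert (0 <= K * (38*d + E)) by (apply Rmult_le_pos; lra).
  assert (0 <= (1-K) * (38*d)) by (apply Rmult_le_pos; unfold d; lra).
  unfold d in *. split; nra.
Qed.


Lemma e70 : (11/13)^70 <= 1/100000.
Proof.
  assert (H: (11/13)^10 <= 19/100) by (simpl; lra).
  replace 70%nat with (10*7)%nat by reflexivity. rewrite pow_mult.
  apply Rle_trans with ((19/100)^7).
  apply pow_incr. split; [apply pow_le; lra | exact H].
  simpl; lra.
Qed.

Lemma pow_le1 y j : 0 <= y <= 1 -> y^j <= 1.
Proof. intros H; induction j; simpl; nra. Qed.

Lemma powx_small x k : Rabs x <= 11/13 -> (70 <= k)%nat -> Rabs (x^k) <= 1/100000.
Proof.
  intros Hx Hk. rewrite <- RPow_abs.
  apply Rle_trans with ((11/13)^k).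
  apply pow_incr; split; [apply Rabs_pos | exact Hx].
  replace k with (70 + (k-70))%nat by lia. rewrite pow_add.
  assert (0 <= (11/13)^(k-70) <= 1) by (split; [apply pow_le; lra | apply pow_le1; lra]).
  assert (0 <= (11/13)^70) by (apply pow_le; lra).
  pose proof e70. nra.
Qed.

Lemma s_facts r : 0 <= r <= 35 ->
  let s := sqrt (1 + 4*r) in s*s = 1 + 4*r /\ 1 <= s <= 12.
Proof.
  intros Hr s. assert (Hs : s*s = 1+4*r) by (apply sqrt_sqrt; lra).
  assert (0 <= s) by apply sqrt_pos. split; [exact Hs|]. split; nra.
Qed.

Lemma mu_abs r : 0 <= r <= 35 -> Rabs (mu r) <= 11/13.
Proof.
  intros Hr. destruct (s_facts r Hr) as [Hs Hb].
  set (s := sqrt (1 + 4*r)) in *.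
  assert (E : mu r = (1-s)/(1+s)) by (unfold mu, mu_minus, mu_plus; fold s; field; lra).
  rewrite E. apply Rabs_le. split.
  - apply Rmult_le_reg_r with (1+s); [lra|]. unfold Rdiv; rewrite Rmult_assoc, Rinv_l by lra. lra.
  - apply Rmult_le_reg_r with (1+s); [lra|]. unfold Rdiv; rewrite Rmult_assoc, Rinv_l by lra. lra.
Qed.

Lemma alpha_dev r k : 0 <= r <= 35 -> (70 <= k)%nat ->
  exists u, Rabs u <= 1/40000 /\ alpha k r = (1 / mu_plus r) * (1 + u).
Proof.
  intros Hr Hk. pose proof (mu_abs r Hr) as Hx. set (x := mu r) in *.
  pose proof (powx_small x k Hx Hk) as H1.
  pose proof (powx_small x (k+1) Hx ltac:(lia)) as H2.
  apply abs_inv in H1; apply abs_inv in H2; pose proof (abs_inv _ _ Hx) as Hx'.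
  exists (x^k*(x-1)/(1-x^(k+1))). split.
  - apply Rabs_le.
    assert (-(2/100000) <= x^k*(x-1) <= 2/100000) by nra.
    split; apply Rmult_le_reg_r with (1 - x^(k+1)); try lra;
      unfold Rdiv; rewrite Rmult_assoc, Rinv_l by lra; nra.
  - unfold alpha. fold x. assert (1 - x^(k+1) <> 0) by lra.
    revert H. rewrite pow_add, pow_1. intro H. f_equal. field. exact H.
Qed.

Lemma fm_gg m r : fm m r = gg r (alpha (m-2) r) (alpha m r) (alpha (m-1) r) (alpha (m-3) r).
Proof. reflexivity. Qed.

Lemma fm_close m r : 0 <= r <= 35 -> (73 <= m)%nat ->
  let a := 1 / mu_plus r in Rabs (fm m r - gg r a a a a) <= 26/10000.
Proof.
  intros Hr Hm a.
  destruct (alpha_dev r (m-2) Hr ltac:(lia)) as [u1 [H1 E1]].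
  destruct (alpha_dev r m Hr ltac:(lia)) as [u2 [H2 E2]].
  destruct (alpha_dev r (m-1) Hr ltac:(lia)) as [u3 [H3 E3]].
  destruct (alpha_dev r (m-3) Hr ltac:(lia)) as [u4 [H4 E4]].
  rewrite fm_gg, E1, E2, E3, E4. fold a.
  destruct (s_facts r Hr) as [Hs Hb].
  set (s := sqrt (1 + 4*r)) in *.
  assert (Ha2 : a*(1+s) = 2) by (unfold a, mu_plus; fold s; field; lra).
  assert (Ha : 0 < a <= 1) by (split; nra).
  clearbody s a.
  apply core; try assumption; try lra.
  - assert (r*a*a = (s-1)*a/2).
    { assert (Er : r*a*a = (s*s-1)/4*a*a) by (rewrite Hs; field).
      rewrite Er.
      replace ((s * s - 1) / 4 * a * a) with ((s-1)/4*(a*(1+s))*a) by field.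
      rewrite Ha2. field. }
    nra.
  - assert (Hq : (1+r)^2 <= (1+2*r)*(1+s)^2) by nra.
    replace ((a*(1+r))^2) with (a^2*(1+r)^2) by ring.
    apply Rle_trans with (a^2*((1+2*r)*(1+s)^2)).
    apply Rmult_le_compat_l; [nra | exact Hq].
    replace (a ^ 2 * ((1 + 2 * r) * (1 + s) ^ 2)) with ((a*(1+s))^2*(1+2*r)) by ring.
    rewrite Ha2. lra.
Qed.

Lemma fmax_ge r k j : (j <= k)%nat -> fm (4+j) r <= fmax_aux k r.
Proof.
  induction k; intros Hj.
  - replace j with 0%nat by lia. simpl. lra.
  - simpl fmax_aux. destruct (Nat.eq_dec j (S k)) as [->|Hne].
    + replace (4 + S k)%nat with (5 + k)%nat by lia. apply Rmax_r.
    + apply Rle_trans with (fmax_aux k r). apply IHk; lia. apply Rmax_l.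
Qed.

Lemma fmax_sup r k : Rbar_le (fmax_aux k r) (f_sup r).
Proof.
  induction k.
  - apply Sup_seq_minor_le with 0%nat. simpl. lra.
  - simpl fmax_aux. apply (Rmax_case _ _ (fun z => Rbar_le z (f_sup r))).
    + exact IHk.
    + apply Sup_seq_minor_le with (S k). replace (S k + 4)%nat with (5+k)%nat by lia. apply Rbar_le_refl.
Qed.

Theorem propositionA1 : forall (r : R) (n : nat),
  0 <= r <= 35 -> (73 <= n)%nat ->
  Rbar_le (Finite (fn n r - 52 / 10000)) (f_sup r) /\
  Rbar_le (f_sup r) (Finite (fn n r + 52 / 10000)).
Proof.
  intros r n Hr Hn. split.
  - apply Rbar_le_trans with (Finite (fn n r)). simpl; lra. apply fmax_sup.
  - apply Rbar_not_lt_le. intro H. apply Sup_seq_minor_lt in H.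
    destruct H as [k Hk]. simpl in Hk. unfold fn in Hk.
    destruct (Compare_dec.le_lt_dec (k+4) n) as [Hle|Hlt].
    + pose proof (fmax_ge r (n-4) k ltac:(lia)).
      replace (k+4)%nat with (4+k)%nat in Hk by lia. lra.
    + pose proof (fm_close (k+4) r Hr ltac:(lia)) as A.
      pose proof (fm_close 73 r Hr ltac:(lia)) as B.
      simpl in A, B. apply abs_inv in A; apply abs_inv in B.
      pose proof (fmax_ge r (n-4) 69 ltac:(lia)) as C.
      replace (4+69)%nat with 73%nat in C by reflexivity. lra.
Qed.
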